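(* Let $G_1,\dots,G_m$ be finite subgraphs of $\mathsf{Path}_{\mathbb Z}$, let $I\subseteq[m]$ with $m\in I$, let $\sigma=\sigma_I$, and let $j\in[m]$. Then \[\vec\Delta(G_{\tilde\sigma_j(1)},\dots,G_{\tilde\sigma_j(m)})\ \ge\ \sum_{i\in I}\Delta(G_i\ominus(G_1\cup\dots\cup G_{i-1})).\]
   Context: Graphs are finite simple graphs without isolated vertices; $\emptyset$ is the empty graph. $\mathsf{Path}_{\mathbb Z}$ has vertex set $\mathbb Z$ and edges $\{i-1,i\}$. $\Delta(G)$ is the number of connected components of $G$; $G\ominus F$ is the union of components of $G$ sharing no vertex with $F$; $\vec\Delta(H_1,\dots,H_m)=\sum_{l=1}^m\Delta(H_l\ominus(H_1\cup\dots\cup H_{l-1}))$. For $I\subseteq[m]$ with $m\in I$, write $I=\{i_1<\dots<i_p\}$ and $i_0:=0$; the permutation $\sigma_I$ of $[m]$ is $\sigma_I(j)=i_h$ if $j=i_{h-1}+1$ for some $h\in[p]$, and $\sigma_I(j)=j-1$ otherwise. For $\sigma=\sigma_I$ and $j\in[m]$, $\tilde\sigma_j:=\sigma_{\tilde I_j}$ where $\tilde I_j=I\cup[i_{h-1}]$ if $j=i_h\in I$, and $\tilde I_j=I\cup[j-1]$ if $j\notin I$ (here $[r]=\{1,\dots,r\}$, $[0]=\emptyset$). *)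

(* Defs.v *)
From HB Require Import structures.
From mathcomp Require Import all_boot all_order all_algebra.
From mathcomp Require Import finmap boolp.
Set Implicit Arguments. Unset Strict Implicit. Unset Printing Implicit Defensive.
Import Order.TTheory GRing.Theory Num.Theory.
Local Open Scope fset_scope.
Local Open Scope ring_scope.

(* A finite subgraph (without isolated vertices) of Path_Z is determined by
   its finite edge set; the integer k encodes the edge {k-1, k}. *)
Definition graph := {fset int}.

Definition verts (G : graph) : {fset int} := G `|` [fset k - 1 | k in G].

Definition adj (G : graph) : rel int :=
  fun u v => ((v == u + 1) && (v \in G)) || ((u == v + 1) && (u \in G)).

Definition gconn (G : graph) (u v : int) : Prop :=
  exists p : seq int, path (adj G) u p /\ last u p = v.

Definition comp (G : graph) (v : int) : {fset int} :=
  [fset w in verts G | `[< gconn G v w >]].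

Definition components (G : graph) : {fset {fset int}} :=
  [fset comp G v | v in verts G].

Definition Delta (G : graph) : nat := #|` components G|.

(* G ominus F : union of the components of G sharing no vertex with F,
   i.e. the edges of G whose component is disjoint from V(F). *)
Definition ominus (G F : graph) : graph :=
  [fset k in G | comp G k `&` verts F == fset0].

Definition prefU (G : nat -> graph) (i : nat) : graph :=
  \big[fsetU/fset0]_(1 <= l < i) G l.

Definition vecDelta (H : nat -> graph) (m : nat) : nat :=
  (\sum_(1 <= l < m.+1) Delta (ominus (H l) (prefU H l)))%N.

(* the sequence i_0 = 0 < i_1 < ... < i_p of I = {i_1 < ... < i_p} *)
Definition iseq (I : {fset nat}) : seq nat := 0%N :: sort leq I.

Definition sigma (I : {fset nat}) (j : nat) : nat :=
  let t := iseq I in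
  let h0 := index j.-1 t in
  if (0 < j)%N && (h0 < size I)%N then nth 0%N t h0.+1 else j.-1.

Definition rng (r : nat) : {fset nat} := [fset x | x in iota 1 r].

Definition tildeI (I : {fset nat}) (j : nat) : {fset nat} :=
  if j \in I then I `|` rng (nth 0%N (iseq I) (index j (iseq I)).-1)
  else I `|` rng j.-1.

(* Main.v *)
Require Import Defs.
From HB Require Import structures.
From mathcomp Require Import all_boot all_order all_algebra.
From mathcomp Require Import finmap boolp.
From mathcomp Require Import zify.
Local Open Scope fset_scope.
Set Implicit Arguments. Unset Strict Implicit. Unset Printing Implicit Defensive.

Lemma adj_mono (H H0 : graph) : H `<=` H0 -> subrel (adj H) (adj H0).
Proof.
move=> /fsubsetP s u v; rewrite /adj => /orP[/andP[a b]|/andP[a b]]; apply/orP;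
  [left|right]; by rewrite a (s _ b).
Qed.

Lemma gconn_mono (H H0 : graph) u v : H `<=` H0 -> gconn H u v -> gconn H0 u v.
Proof. move=> s [p [hp hl]]; exists p; split=> //; exact: (sub_path (adj_mono s)). Qed.

Lemma gconn_ext (G : graph) v u x : gconn G v u -> adj G u x -> gconn G v x.
Proof.
move=> [p [hp hl]] a; exists (rcons p x); rewrite rcons_path last_rcons hp hl a; by [].
Qed.

Lemma gconn_trans (G : graph) u v w : gconn G u v -> gconn G v w -> gconn G u w.
Proof.
move=> [p [hp hl]] [q [hq hq']]; exists (p ++ q); rewrite cat_path last_cat hl hp hq; by [].
Qed.

Lemma gconn_refl (G : graph) u : gconn G u u.
Proof. by exists [::]. Qed.

Lemma verts_mono (H H0 : graph) : H `<=` H0 -> verts H `<=` verts H0.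
Proof.
move=> /fsubsetP s; apply/fsubsetP => x; rewrite /verts !inE => /orP[h|].
  by rewrite (s _ h).
move=> /imfsetP[k /= hk ->]; apply/orP; right; apply/imfsetP; exists k => //=; exact: s.
Qed.

Lemma in_comp (G : graph) (v w : int) : (w \in Defs.comp G v) = (w \in verts G) && `[< gconn G v w >].
Proof. by rewrite /comp inE. Qed.

Lemma comp_eq (H H0 : graph) (v : int) :
  H `<=` H0 -> v \in verts H ->
  (forall e, e \in H0 -> gconn H0 v e -> e \in H) ->
  Defs.comp H v = Defs.comp H0 v.
Proof.
move=> s hv cl; apply/fsetP => w; rewrite !in_comp.
apply/andP/andP => [[h1 /asboolP h2]|[h1 /asboolP [p [hp hl]]]].
  split; first exact: (fsubsetP (verts_mono s) _ h1).
  by apply/asboolP; apply: gconn_mono h2.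
have key : forall q u, gconn H0 v u -> path (adj H0) u q -> path (adj H) u q.
  elim=> [//|x q IH] u gu /= /andP[a pq].
  have gx : gconn H0 v x by apply: gconn_ext gu a.
  rewrite (IH x gx pq) andbT.
  move: a; rewrite /adj => /orP[/andP[a b]|/andP[a b]]; apply/orP; [left|right].
    by rewrite a (cl _ b gx).
  by rewrite a (cl _ b gu).
have hpH := key p v (gconn_refl _ _) hp.
split; last by apply/asboolP; exists p.
clear hp; move: hpH hl; case/lastP: p => [|q x]; first by move=> _ /= <-.
rewrite rcons_path last_rcons => /andP[_ a] <-.
move: a; rewrite /adj => /orP[/andP[_ b]|/andP[/eqP e b]].
  by rewrite /verts inE b.
rewrite /verts inE; apply/orP; right; apply/imfsetP; exists (last v q) => //=.
by rewrite e GRing.addrK.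
Qed.

Lemma Delta_mono (H H0 : graph) :
  H `<=` H0 ->
  (forall v e, v \in verts H -> e \in H0 -> gconn H0 v e -> e \in H) ->
  (Delta H <= Delta H0)%N.
Proof.
move=> s cl; apply: fsubset_leq_card; apply/fsubsetP => C /imfsetP[v /= hv ->].
rewrite (comp_eq s hv (fun e => cl v e hv)); apply/imfsetP; exists v => //=.
exact: (fsubsetP (verts_mono s) _ hv).
Qed.

Lemma ominus_anti (G F F' : graph) : F `<=` F' ->
  (Delta (ominus G F') <= Delta (ominus G F))%N.
Proof.
move=> sF; have sV := fsubsetP (verts_mono sF).
have s1 : ominus G F' `<=` G.
  by apply/fsubsetP => k; rewrite /ominus inE => /andP[].
have s2 : ominus G F `<=` G.
  by apply/fsubsetP => k; rewrite /ominus inE => /andP[].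
apply: Delta_mono.
  apply/fsubsetP => k; rewrite /ominus !inE => /andP[-> /=].
  rewrite !fsetI_eq0 => /fdisjointP d; apply/fdisjointP => x hx.
  by apply: contra (d x hx); apply: sV.
move=> v e hv he ge.
have [k hk gkv] : exists2 k, k \in ominus G F' & gconn G k v.
  move: hv; rewrite /verts inE => /orP[h|/imfsetP[k /= hk ->]].
    by exists v => //; apply: gconn_refl.
  exists k => //; exists [:: (k - 1)%R]; split=> //=; rewrite andbT /adj.
  apply/orP; right; rewrite GRing.subrK eqxx /=.
  by move: hk; rewrite /ominus inE => /andP[].
have gke : gconn G k e by apply: gconn_trans gkv (gconn_mono s2 ge).
move: he; rewrite /ominus !inE => /andP[eG _]; rewrite eG /=.
move: hk; rewrite /ominus !inE => /andP[_]; rewrite !fsetI_eq0 => /fdisjointP d.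
apply/fdisjointP => x; rewrite in_comp => /andP[xv /asboolP gex].
apply: d; rewrite in_comp xv /=; apply/asboolP; exact: gconn_trans gke gex.
Qed.
Lemma sum_sub_uniq (T : eqType) (s1 s2 : seq T) (F : T -> nat) :
  uniq s1 -> uniq s2 -> {subset s1 <= s2} ->
  (\sum_(x <- s1) F x <= \sum_(x <- s2) F x)%N.
Proof.
move=> u1 u2 sub; rewrite [X in (_ <= X)%N](bigID (fun x => x \in s1)) /=.
rewrite -[X in (_ <= X + _)%N]big_filter.
rewrite [X in (_ <= X + _)%N](perm_big s1); first exact: leq_addr.
apply: uniq_perm; [exact: filter_uniq | exact: u1 |].
by move=> x; rewrite mem_filter; case: (boolP (x \in s1)) => // /sub ->.
Qed.

Lemma in_prefU (G : nat -> graph) i x :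
  reflect (exists2 l, (1 <= l < i)%N & x \in G l) (x \in prefU G i).
Proof.
rewrite /prefU; apply: (iffP (bigfcupP _ _ _ _)).
  by move=> [l]; rewrite mem_index_iota andbT => h1 h2; exists l.
by move=> [l h1 h2]; exists l; rewrite ?mem_index_iota ?andbT.
Qed.

Lemma prefU_sub (H G : nat -> graph) a b :
  (forall l, (1 <= l < a)%N -> exists2 l', (1 <= l' < b)%N & H l = G l') ->
  prefU H a `<=` prefU G b.
Proof.
move=> h; apply/fsubsetP => x /in_prefU[l hl hx].
have [l' hl' e] := h l hl; apply/in_prefU; exists l' => //; by rewrite -e.
Qed.

Lemma t_facts (J : {fset nat}) : (forall i, i \in J -> (1 <= i)%N) ->
  sorted ltn (iseq J) /\ uniq (iseq J).
Proof.
move=> hJ.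
have st : sorted ltn (iseq J).
  rewrite /iseq /= (path_sortedE ltn_trans); apply/andP; split.
    apply/allP => x; rewrite mem_sort; exact: hJ.
  rewrite ltn_sorted_uniq_leq sort_uniq fset_uniq /=; exact: (sort_sorted leq_total).
split => //; exact: (sorted_uniq ltn_trans ltnn).
Qed.

Lemma nth_lt (t : seq nat) a b : sorted ltn t -> (a < size t)%N -> (b < size t)%N ->
  (nth 0 t a < nth 0 t b)%N = (a < b)%N.
Proof.
move=> st ha hb; case: (ltnP a b) => hab.
  exact: (sorted_ltn_nth ltn_trans 0 st).
apply/negbTE; rewrite -leqNgt; move: hab; rewrite leq_eqVlt => /orP[/eqP->//|hba].
exact/ltnW/(sorted_ltn_nth ltn_trans 0 st).
Qed.

Lemma nth_le (t : seq nat) a b : sorted ltn t -> (a < size t)%N -> (b < size t)%N ->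
  (nth 0 t a <= nth 0 t b)%N = (a <= b)%N.
Proof. by move=> st ha hb; rewrite leqNgt nth_lt // -leqNgt. Qed.

Lemma sigma_eq (J : {fset nat}) l : sigma J l =
  if (0 < l)%N && (index l.-1 (iseq J) < size J)%N
  then nth 0%N (iseq J) (index l.-1 (iseq J)).+1 else l.-1.
Proof. by []. Qed.

Lemma keyA (m : nat) (G : nat -> graph) (J : {fset nat}) :
  (forall i, i \in J -> (1 <= i <= m)%N) ->
  (\sum_(i <- J) Delta (ominus (G i) (prefU G i))
     <= vecDelta (fun l => G (sigma J l)) m)%N.
Proof.
move=> hJ.
have hJ1 : forall i, i \in J -> (1 <= i)%N by move=> i /hJ /andP[].
have [st ut] := t_facts hJ1.
set s := sort leq J.
have ts : iseq J = 0%N :: s by [].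
have ss : size s = size J by rewrite size_sort.
have szt : size (iseq J) = (size J).+1 by rewrite ts /= ss.
have ms : s =i J by apply: mem_sort.
pose phi i := (nth 0 (iseq J) (index i s)).+1.
set f := fun l => Delta (ominus (G (sigma J l)) (prefU (fun l => G (sigma J l)) l)).
have Hk : forall i, i \in J -> (index i s < size J)%N /\ nth 0 (iseq J) (index i s).+1 = i.
  move=> i hi; rewrite -ss index_mem ms hi; split=> //.
  by rewrite ts /= nth_index // ms.
have Hp : forall i, i \in J -> (nth 0 (iseq J) (index i s) < i)%N.
  move=> i hi; have [h1 h2] := Hk i hi.
  rewrite -[X in (_ < X)%N]h2 nth_lt // szt; lia.
have Hsig : forall i, i \in J -> sigma J (phi i) = i.
  move=> i hi; have [h1 h2] := Hk i hi.
  rewrite sigma_eq /phi succnK index_uniq // ?szt; last exact: ltnW h1.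
  by rewrite h1.
have Hrange : forall i, i \in J -> (1 <= phi i <= m)%N.
  move=> i hi; have h := Hp i hi; have /andP[_ hm] := hJ i hi; rewrite /phi; exact: leq_trans h hm.
have Hinj : {in J &, injective phi}.
  move=> i i' hi hi' [] /eqP; have [h1 h2] := Hk i hi; have [h1' h2'] := Hk i' hi'.
  have k1 : (index i s < size (iseq J))%N by rewrite szt; exact: ltnW h1.
  have k2 : (index i' s < size (iseq J))%N by rewrite szt; exact: ltnW h1'.
  rewrite nth_uniq // => /eqP e.
  by rewrite -h2 -h2' e.
have Hpre : forall i, i \in J ->
    prefU (fun l => G (sigma J l)) (phi i) `<=` prefU G i.
  move=> i hi; have [h1 h2] := Hk i hi; have hpi := Hp i hi.
  apply: prefU_sub => l /andP[l1 l2]; exists (sigma J l) => //.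
  rewrite sigma_eq; case: ifP => [/andP[l0 hh]|hn].
    have hmem : l.-1 \in iseq J by rewrite -index_mem szt; lia.
    have e := nth_index 0%N hmem.
    have hlt : (index l.-1 (iseq J) < index i s)%N.
      rewrite -(nth_lt st) ?szt; [|lia|exact: ltnW h1].
      by rewrite e (ltn_predK l1) -ltnS.
    have pos : (0 < nth 0 (iseq J) (index l.-1 (iseq J)).+1)%N.
      rewrite ts; apply: hJ1; rewrite -ms; apply: mem_nth; rewrite ss; exact: hh.
    rewrite pos andTb.
    apply: (@leq_ltn_trans (nth 0 (iseq J) (index i s))) => //.
    rewrite nth_le //; first by rewrite szt ltnS.
    by rewrite szt; exact: ltnW h1.
  have hJn : (0 < size J)%N by apply: leq_ltn_trans h1.
  move: l1 l2 hn; case: l => [//|l'] _ l2 hn /=.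
  case: l' l2 hn => [|l'] l2 hn.
    by move: hn; rewrite ts /= hJn.
  by apply: ltn_trans hpi.
rewrite /vecDelta.
apply: (@leq_trans (\sum_(i <- J) f (phi i))).
  rewrite big_seq [X in (_ <= X)%N]big_seq; apply: leq_sum => i hi.
  rewrite /f Hsig //; exact: ominus_anti (Hpre i hi).
rewrite -(big_map phi xpredT f).
apply: sum_sub_uniq.
- by rewrite map_inj_in_uniq // fset_uniq.
- exact: iota_uniq.
move=> l /mapP[i hi ->]; rewrite mem_index_iota; have := Hrange i hi; lia.
Qed.
Lemma in_rng r x : x \in rng r -> (1 <= x <= r)%N.
Proof.
move=> /imfsetP[y /= hy ->]; move: hy; rewrite mem_iota => /andP[-> h] /=.
by rewrite -ltnS -[r.+1]add1n.
Qed.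

Lemma nth_iseq_le (I : {fset nat}) m n :
  (forall i, i \in I -> (1 <= i <= m)%N) -> (nth 0%N (iseq I) n <= m)%N.
Proof.
move=> HI; case: (ltnP n (size (iseq I))) => hn; last by rewrite nth_default.
have := mem_nth 0%N hn; rewrite /iseq inE mem_sort => /orP[/eqP->//|/HI/andP[]//].
Qed.

Unset Implicit Arguments.

Theorem lemma5p3 (m : nat) (G : nat -> graph) (I : {fset nat}) (j : nat)
  (HI : forall i, i \in I -> (1 <= i <= m)%N) (HmI : m \in I)
  (Hj : (1 <= j <= m)%N) :
  (\sum_(i <- I) Delta (ominus (G i) (prefU G i))
     <= vecDelta (fun l => G (sigma (tildeI I j) l)) m)%N.
Proof.
have sub : {subset I <= tildeI I j}.
  by move=> x hx; rewrite /tildeI; case: ifP => _; rewrite inE hx.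
have rngJ : forall i, i \in tildeI I j -> (1 <= i <= m)%N.
  move=> i; rewrite /tildeI; case: ifP => _; rewrite inE => /orP[/HI//|/in_rng/andP[h1 h2]];
    rewrite h1 /=; apply: (leq_trans h2).
    exact: nth_iseq_le.
  by case/andP: Hj => _; apply: leq_trans; apply: leq_pred.
apply: leq_trans (keyA G rngJ).
apply: sum_sub_uniq => //; exact: fset_uniq.
Qed.
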